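(* Let $\mathfrak{g} = \mathfrak{X}(S^1)\ltimes Lb$ and let $\widehat{\mathfrak{g}} = \mathfrak{g}\oplus\mathbb{R}$ be its central extension by the 2-cocycle $c = \lambda_1 c_1 + \lambda_2 c_2 + \lambda_3 c_3$ (notation as in the context), where $\lambda_1,\lambda_2,\lambda_3\in\mathbb{R}$ satisfy $\frac{\lambda_1}{4} + \lambda_2 - 2\lambda_3 = 0$. Fix $a\in\mathbb{R}$ and define the linear functional $(\eta,a)\in\widehat{\mathfrak{g}}^*$ by $$\left\langle(\eta, a),\left(g\partial, \begin{pmatrix} x & y\\ 0 & -x\end{pmatrix}, t\right)\right\rangle = \int_{S^1} y\, d\theta + a t .$$ Let $\mathfrak{g}_{(\eta,a)} = \{X\in\mathfrak{g} : \langle(\eta,a),[(Y,0),(X,0)]_{\widehat{\mathfrak{g}}}\rangle = 0 \text{ for all } Y\in\mathfrak{g}\}$ be the stabiliser of $(\eta,a)$ under the coadjoint action, and let $\mathfrak{h} = Lb$, viewed as the ideal $\{(0,b): b\in Lb\}$ of $\mathfrak{g}$. Then $\mathfrak{g} = \mathfrak{g}_{(\eta,a)}\oplus\mathfrak{h}$ as vector spaces, i.e. $\mathfrak{g}_{(\eta,a)}\cap\mathfrak{h} = \{0\}$ and $\mathfrak{g}_{(\eta,a)}+\mathfrak{h} = \mathfrak{g}$.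
   Context: All functions are smooth and $2\pi$-periodic in $\theta$; $'$ denotes $d/d\theta$. $\mathfrak{X}(S^1) = \{f\partial : f\in C^\infty(S^1)\}$ with bracket $[f\partial, g\partial] = (fg' - f'g)\partial$. $Lb$ is the Lie algebra of smooth maps $S^1\to\left\{\begin{pmatrix} x & y\\ 0 & -x\end{pmatrix} : x,y\in\mathbb{R}\right\}$ with pointwise matrix commutator. The Lie algebra $\mathfrak{g} = \mathfrak{X}(S^1)\ltimes Lb$ and its central extension $\widehat{\mathfrak{g}} = \mathfrak{X}(S^1)\ltimes Lb\oplus\mathbb{R}$ have bracket $$[(f\partial, b, \delta_1), (g\partial, d, \delta_2)] = \big([f\partial, g\partial],\ [d, b] + f d' - g b',\ c((f\partial, b), (g\partial, d))\big),$$ where for $b_i = \begin{pmatrix} x_i & y_i\\ 0 & -x_i\end{pmatrix}$ the cocycles are $c_1((f_1\partial,b_1),(f_2\partial,b_2)) = \int_{S^1} x_1 x_2'\,d\theta$, $c_2((f_1\partial,b_1),(f_2\partial,b_2)) = \int_{S^1}(f_1'' x_2 - f_2'' x_1)\,d\theta$, $c_3((f_1\partial,b_1),(f_2\partial,b_2)) = \int_{S^1}(f_1'' f_2' - f_1' f_2'')\,d\theta$. *)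

(* Defs.v *)
From Stdlib Require Import Reals.
From Coquelicot Require Import Coquelicot.
Open Scope R_scope.

(** Smooth 2*PI-periodic real functions (functions on S^1 in the angle theta). *)
Definition smooth_per (f : R -> R) : Prop :=
  (forall (n : nat) (t : R), ex_derive_n f n t) /\
  (forall t : R, f (t + 2 * PI) = f t).

Definition intS1 (f : R -> R) : R := RInt f 0 (2 * PI).

(** Elements of g = X(S^1) |x Lb : a vector field f d/dtheta and a map
    b = [[x, y], [0, -x]] from S^1 to the Borel subalgebra. *)
Record gel := mkG { vf : R -> R ; lx : R -> R ; ly : R -> R }.

Definition in_g (X : gel) : Prop :=
  smooth_per (vf X) /\ smooth_per (lx X) /\ smooth_per (ly X).

Definition gzero : gel := mkG (fun _ => 0) (fun _ => 0) (fun _ => 0).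
Definition gadd (X Y : gel) : gel :=
  mkG (fun t => vf X t + vf Y t) (fun t => lx X t + lx Y t)
      (fun t => ly X t + ly Y t).

Record M2 := mkM { m11 : R ; m12 : R ; m21 : R ; m22 : R }.
Definition mmul (A B : M2) : M2 :=
  mkM (m11 A * m11 B + m12 A * m21 B) (m11 A * m12 B + m12 A * m22 B)
      (m21 A * m11 B + m22 A * m21 B) (m21 A * m12 B + m22 A * m22 B).
Definition msub (A B : M2) : M2 :=
  mkM (m11 A - m11 B) (m12 A - m12 B) (m21 A - m21 B) (m22 A - m22 B).
Definition mcomm (A B : M2) : M2 := msub (mmul A B) (mmul B A).
Definition bmat (x y : R) : M2 := mkM x y 0 (- x).

(** Bracket of g:
    [(f d, b), (g d, d)] = ([f d, g d], [d, b] + f d' - g b'),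
    with [f d, g d] = (f g' - f' g) d.  The Lb-component [d,b] lies in
    the Borel subalgebra, so it is recorded by its (1,1) and (1,2) entries. *)
Definition gbracket (X Y : gel) : gel :=
  let f := vf X in let g := vf Y in
  mkG (fun t => f t * Derive g t - Derive f t * g t)
      (fun t => m11 (mcomm (bmat (lx Y t) (ly Y t)) (bmat (lx X t) (ly X t)))
                + f t * Derive (lx Y) t - g t * Derive (lx X) t)
      (fun t => m12 (mcomm (bmat (lx Y t) (ly Y t)) (bmat (lx X t) (ly X t)))
                + f t * Derive (ly Y) t - g t * Derive (ly X) t).

Definition c1 (X1 X2 : gel) : R :=
  intS1 (fun t => lx X1 t * Derive (lx X2) t).
Definition c2 (X1 X2 : gel) : R :=
  intS1 (fun t => Derive_n (vf X1) 2 t * lx X2 t - Derive_n (vf X2) 2 t * lx X1 t).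
Definition c3 (X1 X2 : gel) : R :=
  intS1 (fun t => Derive_n (vf X1) 2 t * Derive (vf X2) t
                  - Derive (vf X1) t * Derive_n (vf X2) 2 t).

Definition cocycle (l1 l2 l3 : R) (X1 X2 : gel) : R :=
  l1 * c1 X1 X2 + l2 * c2 X1 X2 + l3 * c3 X1 X2.

Definition hbracket (l1 l2 l3 : R) (U V : gel * R) : gel * R :=
  (gbracket (fst U) (fst V), cocycle l1 l2 l3 (fst U) (fst V)).

Definition eta_a (a : R) (U : gel * R) : R := intS1 (ly (fst U)) + a * snd U.

Definition in_stab (l1 l2 l3 a : R) (X : gel) : Prop :=
  in_g X /\
  forall Y : gel, in_g Y ->
    eta_a a (hbracket l1 l2 l3 (Y, 0) (X, 0)) = 0.

Definition in_h (X : gel) : Prop := in_g X /\ vf X = (fun _ => 0).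

(* Main.v *)
Require Import Defs.
From Stdlib Require Import Reals Lra Lia ZArith FunctionalExtensionality.
From Coquelicot Require Import Coquelicot.
Open Scope R_scope.

Ltac etan := repeat match goal with |- context [Derive (fun x => ?h x)] => change (Derive (fun x => h x)) with (Derive h) end.

Lemma sm_ex f n t : smooth_per f -> ex_derive (Derive_n f n) t.
Proof. intros [H _]. exact (H (S n) t). Qed.

Lemma sm_per f n t : smooth_per f -> Derive_n f n (t + 2*PI) = Derive_n f n t.
Proof. intros [_ H]. rewrite <- Derive_n_comp_trans. apply Derive_n_ext. intros; apply H. Qed.

Lemma sm_D f : smooth_per f -> smooth_per (Derive f).
Proof. intros Hf. split.
  - intros [|n] t; [exact I|]. simpl.
    apply ex_derive_ext with (f := Derive_n f (S n)).
    + intros u. replace (S n) with (n+1)%nat by lia. rewrite <- (Derive_n_comp f n 1). reflexivity.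
    + apply sm_ex; auto.
  - intros t. exact (sm_per f 1 t Hf).
Qed.

Lemma sm_scal c f : smooth_per f -> smooth_per (fun t => c * f t).
Proof. intros [H1 H2]. split.
  - intros n t. apply ex_derive_n_scal_l. auto.
  - intros t. rewrite H2. reflexivity.
Qed.

Lemma sm_0 : smooth_per (fun _ => 0).
Proof. split. intros n t. apply ex_derive_n_const. reflexivity. Qed.

Lemma RInt_lin2 f g c : ex_RInt f 0 (2*PI) -> ex_RInt g 0 (2*PI) ->
  RInt (fun t => f t + c * g t) 0 (2*PI) = RInt f 0 (2*PI) + c * RInt g 0 (2*PI).
Proof. intros Hf Hg.
  change (RInt (fun t => plus (f t) (scal c (g t))) 0 (2*PI) = plus (RInt f 0 (2*PI)) (scal c (RInt g 0 (2*PI)))).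
  rewrite (RInt_plus f (fun t => scal c (g t))).
  - f_equal. exact (RInt_scal g 0 (2*PI) c Hg).
  - auto.
  - apply ex_RInt_scal; auto.
Qed.

Lemma exR_of_der (h : R -> R) : (forall t, ex_derive h t) -> ex_RInt h 0 (2*PI).
Proof. intros H. apply (ex_RInt_continuous (V:=R_CompleteNormedModule)). intros z _; exact (ex_derive_continuous h z (H z)). Qed.

Lemma FTC_per H : (forall t, ex_derive H t) -> (forall t, continuous (Derive H) t) ->
  H (0 + 2*PI) = H 0 -> RInt (Derive H) 0 (2*PI) = 0.
Proof. intros H1 H2 H3. rewrite RInt_Derive; auto. rewrite Rplus_0_l in H3. lra. Qed.

Lemma per_nat (f : R -> R) : (forall t, f (t + 2*PI) = f t) -> forall n t, f (t + 2*PI*INR n) = f t.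
Proof. intros H n; induction n as [|n IH]; intros t.
  - simpl. f_equal. ring.
  - rewrite S_INR. replace (t + 2*PI*(INR n + 1)) with ((t + 2*PI*INR n) + 2*PI) by ring.
    rewrite H. auto.
Qed.

Lemma per_Z (f : R -> R) : (forall t, f (t + 2*PI) = f t) -> forall z t, f (t + 2*PI*IZR z) = f t.
Proof. intros H z t.
  destruct (Z_le_gt_dec 0 z) as [Hz|Hz].
  - rewrite <- (Z2Nat.id z Hz). rewrite <- INR_IZR_INZ. apply per_nat; auto.
  - assert (E : z = (- Z.of_nat (Z.to_nat (- z)))%Z) by lia.
    rewrite E, opp_IZR, <- INR_IZR_INZ.
    rewrite <- (per_nat f H (Z.to_nat (-z)) (t + 2 * PI * - INR (Z.to_nat (- z)))).
    f_equal. ring.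
Qed.

Lemma pos_zero (f : R -> R) : (forall t, continuous f t) -> (forall t, f (t + 2*PI) = f t) ->
  RInt (fun t => f t * f t) 0 (2*PI) = 0 -> forall t, f t = 0.
Proof.
  intros Hc Hp HI t.
  destruct (Req_dec (f t) 0) as [|Hne]; auto. exfalso.
  set (g := fun t => f t * f t) in *.
  assert (Hgc : forall x, continuous g x).
  { intros x. apply (continuous_mult f f x); auto. }
  assert (HexR : forall a b, ex_RInt g a b).
  { intros a b. apply (ex_RInt_continuous (V:=R_CompleteNormedModule)). intros z _. exact (Hgc z). }
  assert (Hg0 : forall x, 0 <= g x). { intros x; unfold g; nra. }
  assert (PI_pos : 0 < PI) by apply PI_RGT_0.
  set (k := Int_part (t / (2*PI))).
  set (t1 := t - 2*PI*IZR k).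
  destruct (base_Int_part (t / (2*PI))) as [B1 B2]. fold k in B1, B2.
  assert (Ht1a : 0 <= t1).
  { unfold t1. apply Rmult_le_compat_l with (r := 2*PI) in B1; [|lra].
    replace (2*PI*(t/(2*PI))) with t in B1 by (field; lra). lra. }
  assert (Ht1b : t1 < 2*PI).
  { unfold t1. assert (IZR k > t/(2*PI) - 1) by lra.
    apply Rmult_gt_compat_l with (r := 2*PI) in H; [|lra].
    replace (2*PI*(t/(2*PI) - 1)) with (t - 2*PI) in H by (field; lra). lra. }
  assert (Hft1 : f t1 = f t).
  { unfold t1. rewrite <- (per_Z f Hp k (t - 2*PI*IZR k)). f_equal. ring. }
  assert (Hgt1 : 0 < g t1). { unfold g. rewrite Hft1. nra. }
  assert (Hloc : locally t1 (fun x => 0 < g x)).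
  { apply (Hgc t1 (fun y => 0 < y)). apply (open_gt 0 (g t1)). exact Hgt1. }
  destruct Hloc as [eps Heps].
  set (d := t1 + Rmin (eps/2) ((2*PI - t1)/2)).
  assert (Hd1 : t1 < d). { unfold d. apply Rmin_case; destruct eps; simpl; lra. }
  assert (Hd2 : d < 2*PI). { unfold d. pose proof (Rmin_r (eps/2) ((2*PI - t1)/2)). lra. }
  assert (Hd3 : d <= t1 + eps/2). { unfold d. pose proof (Rmin_l (eps/2) ((2*PI - t1)/2)). lra. }
  assert (P1 : 0 <= RInt g 0 t1) by (apply RInt_ge_0; auto).
  assert (P3 : 0 <= RInt g d (2*PI)) by (apply RInt_ge_0; auto; lra).
  assert (P2 : 0 < RInt g t1 d).
  { apply RInt_gt_0; auto. intros x Hx. apply Heps.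
    change (Rabs (x - t1) < eps). destruct eps; simpl in *. rewrite Rabs_right; lra. }
  assert (E1 := RInt_Chasles g 0 t1 (2*PI) (HexR _ _) (HexR _ _)).
  assert (E2 := RInt_Chasles g t1 d (2*PI) (HexR _ _) (HexR _ _)).
  change plus with Rplus in E1, E2. simpl in E1, E2.
  lra.
Qed.

Lemma RInt_add2 (f g : R -> R) : ex_RInt f 0 (2*PI) -> ex_RInt g 0 (2*PI) ->
  RInt (fun t => f t + g t) 0 (2*PI) = RInt f 0 (2*PI) + RInt g 0 (2*PI).
Proof. intros Hf Hg. exact (RInt_plus f g 0 (2*PI) Hf Hg). Qed.

Lemma RInt_mul2 (g : R -> R) c : ex_RInt g 0 (2*PI) ->
  RInt (fun t => c * g t) 0 (2*PI) = c * RInt g 0 (2*PI).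
Proof. intros Hg. exact (RInt_scal g 0 (2*PI) c Hg). Qed.

Ltac leaf := match goal with H : smooth_per ?f |- ex_derive _ _ =>
  first [exact (sm_ex f 0 _ H) | exact (sm_ex f 1 _ H) | exact (sm_ex f 2 _ H)
        | exact (sm_ex f 3 _ H) | exact (sm_ex f 4 _ H)] end.
Ltac unf := unfold gbracket, mcomm, msub, mmul, bmat; cbn [vf lx ly m11 m12 m21 m22].
Ltac exr := apply exR_of_der; intro; unf; auto_derive; repeat split; leaf.

Definition Icomb (l1 l2 l3 a : R) (Y X : gel) (t : R) : R :=
  ly (gbracket Y X) t + a * (l1 * (lx Y t * Derive (lx X) t)
   + l2 * (Derive_n (vf Y) 2 t * lx X t - Derive_n (vf X) 2 t * lx Y t)
   + l3 * (Derive_n (vf Y) 2 t * Derive (vf X) t - Derive (vf Y) t * Derive_n (vf X) 2 t)).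

Lemma combine l1 l2 l3 a X Y : in_g X -> in_g Y ->
  eta_a a (hbracket l1 l2 l3 (Y,0) (X,0)) = intS1 (Icomb l1 l2 l3 a Y X).
Proof.
  intros [HX1 [HX2 HX3]] [HY1 [HY2 HY3]].
  unfold eta_a, hbracket, cocycle, c1, c2, c3, intS1, Icomb. cbn [fst snd].
  rewrite RInt_add2; [| exr | exr].
  rewrite RInt_mul2; [| exr].
  rewrite RInt_add2; [| exr | exr].
  rewrite RInt_add2; [| exr | exr].
  rewrite !RInt_mul2; try exr.
  reflexivity.
Qed.

Lemma RInt_extR (f g : R -> R) : (forall t, f t = g t) -> RInt f 0 (2*PI) = RInt g 0 (2*PI).
Proof. intros H. apply RInt_ext. intros; apply H. Qed.


Lemma sq_zero (x : R -> R) (c : R) (Hc : c <> 0) : smooth_per x ->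
  RInt (fun t => c * (x t * x t)) 0 (2*PI) = 0 -> x = fun _ => 0.
Proof.
  intros Hx HI. apply functional_extensionality.
  apply pos_zero.
  - intros t. exact (ex_derive_continuous x t (sm_ex x 0 t Hx)).
  - apply Hx.
  - rewrite RInt_mul2 in HI.
    + destruct (Rmult_integral _ _ HI); [contradiction|auto].
    + apply exR_of_der; intro; auto_derive; repeat split; leaf.
Qed.

Lemma part1 l1 l2 l3 a X : in_stab l1 l2 l3 a X -> in_h X -> X = gzero.
Proof.
  intros [HX Hs] [_ Hv]. destruct X as [f x y]; cbn in Hv; subst f.
  pose proof HX as [H1 [H2 H3]]; cbn [vf lx ly] in H1, H2, H3.
  assert (Ex : x = fun _ => 0).
  { set (Y1 := mkG (fun _ => 0) (fun _ => 0) x).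
    assert (HY : in_g Y1) by (split; [|split]; cbn; auto using sm_0).
    pose proof (Hs Y1 HY) as E. rewrite combine in E; auto. unfold intS1 in E.
    apply (sq_zero x 2); auto; try lra.
    etransitivity; [|exact E]. apply RInt_extR. intros t.
    unfold Icomb, Y1. unf. rewrite ?Derive_n_const, ?Derive_const. ring. }
  subst x.
  assert (Ey : y = fun _ => 0).
  { set (Y2 := mkG (fun _ => 0) y (fun _ => 0)).
    assert (HY : in_g Y2) by (split; [|split]; cbn; auto using sm_0).
    pose proof (Hs Y2 HY) as E. rewrite combine in E; auto. unfold intS1 in E.
    apply (sq_zero y (-2)); auto; try lra.
    etransitivity; [|exact E]. apply RInt_extR. intros t.
    unfold Icomb, Y2. unf. rewrite ?Derive_n_const, ?Derive_const. ring. }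
  subst y. reflexivity.
Qed.


Lemma sm_minus f g : smooth_per f -> smooth_per g -> smooth_per (fun t => f t - g t).
Proof. intros [F1 F2] [G1 G2]. split.
  - intros n t. apply ex_derive_n_minus; apply filter_forall; intros; auto.
  - intros t. rewrite F2, G2. reflexivity.
Qed.

Section P2.
Variables (l1 l2 l3 a : R) (f g v : R -> R).
Definition kk := - a * (l1/4 + l2/2).
Definition cc := a * l3 - a * l2 / 2.
Definition Hf (t : R) := - (f t * v t) + cc * (Derive g t * Derive f t) + kk * (g t * Derive (Derive f) t).
Definition DHf (t : R) := - (Derive f t * v t + f t * Derive v t)
  + cc * (Derive (Derive g) t * Derive f t + Derive g t * Derive (Derive f) t)
  + kk * (Derive g t * Derive (Derive f) t + g t * Derive (Derive (Derive f)) t).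

Lemma Hf_der : smooth_per f -> smooth_per g -> smooth_per v ->
  forall t, is_derive Hf t (DHf t).
Proof. intros Hf' Hg Hv t. unfold Hf, DHf. auto_derive.
  - repeat split; leaf.
  - etan. ring.
Qed.
End P2.

Lemma part2_stab l1 l2 l3 a f (hl : l1 / 4 + l2 - 2 * l3 = 0) : smooth_per f ->
  in_stab l1 l2 l3 a (mkG f (fun t => (-1/2) * Derive f t) (fun t => kk l1 l2 a * Derive (Derive f) t)).
Proof.
  intros Hf0.
  assert (HX : in_g (mkG f (fun t => (-1/2) * Derive f t) (fun t => kk l1 l2 a * Derive (Derive f) t))).
  { split; [|split]; cbn [vf lx ly]; auto; apply sm_scal; auto using sm_D. }
  split; auto.
  intros Y HY. rewrite combine; auto.
  destruct Y as [g u v]. destruct HY as [Hg [Hu Hv]]; cbn [vf lx ly] in Hg, Hu, Hv.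
  unfold intS1.
  transitivity (RInt (DHf l1 l2 l3 a f g v) 0 (2*PI)).
  { apply RInt_extR. intros t. unfold Icomb, DHf. unf.
    rewrite !Derive_scal. cbn [Derive_n]. etan.
    unfold kk, cc.
    replace l1 with (8*l3 - 4*l2) by lra. field. }
  transitivity (RInt (Derive (Hf l1 l2 l3 a f g v)) 0 (2*PI)).
  { apply RInt_extR. intros t. symmetry. apply is_derive_unique. apply Hf_der; auto. }
  apply FTC_per.
  - intros t. eexists. apply Hf_der; auto.
  - intros t. apply (continuous_ext (DHf l1 l2 l3 a f g v)).
    + intros x. symmetry. apply is_derive_unique. apply Hf_der; auto.
    + apply (ex_derive_continuous (DHf l1 l2 l3 a f g v) t). unfold DHf. auto_derive. repeat split; leaf.
  - assert (P0 : f (0 + 2*PI) = f 0) by exact (sm_per f 0 0 Hf0).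
    assert (P1 : Derive f (0 + 2*PI) = Derive f 0) by exact (sm_per f 1 0 Hf0).
    assert (P2 : Derive (Derive f) (0 + 2*PI) = Derive (Derive f) 0) by exact (sm_per f 2 0 Hf0).
    assert (Q0 : g (0 + 2*PI) = g 0) by exact (sm_per g 0 0 Hg).
    assert (Q1 : Derive g (0 + 2*PI) = Derive g 0) by exact (sm_per g 1 0 Hg).
    assert (V0 : v (0 + 2*PI) = v 0) by exact (sm_per v 0 0 Hv).
    unfold Hf. rewrite P0, P1, P2, Q0, Q1, V0. reflexivity.
Qed.

Theorem mainTheorem1 (l1 l2 l3 a : R)
  (hl : l1 / 4 + l2 - 2 * l3 = 0) :
  (forall X : gel, in_stab l1 l2 l3 a X -> in_h X -> X = gzero) /\
  (forall Z : gel, in_g Z ->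
     exists X H : gel, in_stab l1 l2 l3 a X /\ in_h H /\ Z = gadd X H).
Proof.
  split.
  - intros X. apply part1.
  - intros [f x y] [Hf [Hx Hy]]. cbn [vf lx ly] in Hf, Hx, Hy.
    set (X := mkG f (fun t => (-1/2) * Derive f t) (fun t => kk l1 l2 a * Derive (Derive f) t)).
    exists X, (mkG (fun _ => 0) (fun t => x t - lx X t) (fun t => y t - ly X t)).
    split; [apply part2_stab; auto|]. split.
    + split; [|reflexivity]. split; [|split]; cbn [vf lx ly]; auto using sm_0;
      apply sm_minus; auto; unfold X; cbn [lx ly]; apply sm_scal; auto using sm_D.
    + unfold gadd, X. cbn [vf lx ly]. f_equal; apply functional_extensionality; intros t; ring.
Qed.
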